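(* Let $K$ be a commutative ring with identity, let $B$ be a monoid and $n\ge 0$. If $B$ is weak bi-$FP_n$ over $K$, then $B$ is both left-$FP_n$ and right-$FP_n$ over $K$.
   Context: $KB$ denotes the monoid ring, with augmentation $\varepsilon: KB\to K$, $b\mapsto 1$ for $b\in B$. A left (or right) module $M$ over a ring is of type $FP_n$ if there is an exact sequence $0\leftarrow M\leftarrow P_0\leftarrow P_1\leftarrow\cdots\leftarrow P_n$ with $P_0,\dots,P_n$ finitely generated free modules. $B$ is left-$FP_n$ (resp. right-$FP_n$) if $K$, regarded as a left (resp. right) $KB$-module via $a\cdot k=\varepsilon(a)k$ (resp. $k\cdot a=k\varepsilon(a)$), is of type $FP_n$. A $(KB,KB)$-bimodule is an abelian group with commuting left and right $KB$-actions such that $km=mk$ for $k\in K$; the free $(KB,KB)$-bimodule of rank $1$ is $KB\otimes_K KB$ with action $a(u\otimes v)b=au\otimes vb$, and a free bimodule of rank $r$ is a direct sum of $r$ copies of it. $B$ is weak bi-$FP_n$ if $K$, regarded as a $(KB,KB)$-bimodule via $a\cdot k\cdot a'=\varepsilon(a)k\varepsilon(a')$, admits an exact sequence $0\leftarrow K\leftarrow F_0\leftarrow\cdots\leftarrow F_n$ with $F_0,\dots,F_n$ finitely generated free $(KB,KB)$-bimodules. *)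

(* Defs.v *)
From HB Require Import structures.
From mathcomp Require Import all_boot all_algebra.
From mathcomp Require Import finmap.
From mathcomp Require Import monalg.

Set Implicit Arguments.
Unset Strict Implicit.
Unset Printing Implicit Defensive.

Import GRing.Theory.
Local Open Scope fset.
Local Open Scope ring_scope.

Section MonRing.
Variables (B : monoidType) (K : comPzRingType).

Definition monring : predArgType := malg B K.
HB.instance Definition _ := GRing.Zmodule.on monring.

Implicit Types (g : monring).

Definition mrmul g1 g2 : monring :=
  \sum_(k1 <- msupp g1) \sum_(k2 <- msupp g2)
     << g1@_k1 * g2@_k2 *g (k1 * k2)%g >>.

Definition mrone : monring := << 1 *g (1%g : B) >>.

Lemma mrmulw (d1 d2 : {fset B}) g1 g2 :
  msupp g1 `<=` d1 -> msupp g2 `<=` d2 ->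
  mrmul g1 g2 = \sum_(k1 <- d1) \sum_(k2 <- d2)
     << g1@_k1 * g2@_k2 *g (k1 * k2)%g >>.
Proof.
move=> le_d1 le_d2; rewrite /mrmul (big_fset_incl _ le_d1) /=.
  apply/eq_bigr=> k1 _; apply/big_fset_incl => // k _ /mcoeff_outdom ->.
  by rewrite mulr0 monalgU0.
move=> k _ /mcoeff_outdom g1k.
by rewrite big1 => // k' _; rewrite g1k mul0r monalgU0.
Qed.

Lemma mrmulUg c k g :
  mrmul << c *g k >> g = \sum_(k' <- msupp g) << c * g@_k' *g (k * k')%g >>.
Proof.
rewrite (mrmulw msuppU_le (fsubset_refl _)) big_seq_fset1.
by apply/eq_bigr => k' _; rewrite mcoeffUU.
Qed.

Lemma mrmulgU c k g :
  mrmul g << c *g k >> = \sum_(k' <- msupp g) << g@_k' * c *g (k' * k)%g >>.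
Proof.
rewrite (mrmulw (fsubset_refl _) msuppU_le).
by apply/eq_bigr=> k' _; rewrite big_seq_fset1 mcoeffUU.
Qed.

Lemma mrmulUU c1 c2 k1 k2 :
  mrmul << c1 *g k1 >> << c2 *g k2 >> = << c1 * c2 *g (k1 * k2)%g >>.
Proof. by rewrite (mrmulw msuppU_le msuppU_le) !big_seq_fset1 !mcoeffUU. Qed.

Lemma mrmul0g : left_zero 0 mrmul.
Proof. by move=> g; rewrite /mrmul msupp0 big_seq_fset0. Qed.

Lemma mrmulg0 : right_zero 0 mrmul.
Proof. by move=> g; rewrite /mrmul big1 // => k _; rewrite msupp0 big_seq_fset0. Qed.

Lemma mrmulEl1 g1 g2 :
  mrmul g1 g2 = \sum_(k1 <- msupp g1) mrmul << g1@_k1 *g k1 >> g2.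
Proof. by apply/eq_bigr=> k _; rewrite mrmulUg. Qed.

Lemma mrmulEr1 g1 g2 :
  mrmul g1 g2 = \sum_(k2 <- msupp g2) mrmul g1 << g2@_k2 *g k2 >>.
Proof. by rewrite [LHS]/mrmul exchange_big; apply/eq_bigr=> k _; rewrite mrmulgU. Qed.

Lemma mrmul1g : left_id mrone mrmul.
Proof.
move=> g; rewrite /mrone mrmulUg [RHS]monalgE.
by apply/eq_bigr=> kg _; rewrite mul1r mul1g.
Qed.

Lemma mrmulg1 : right_id mrone mrmul.
Proof.
move=> g; rewrite /mrone mrmulgU [RHS]monalgE.
by apply/eq_bigr=> k _; rewrite mulr1 mulg1.
Qed.

Lemma mrmulDl : left_distributive mrmul +%R.
Proof.
move=> g1 g2 g; rewrite [in RHS](mrmulw (fsubsetUl _ (msupp g2)) (fsubset_refl _)).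
rewrite [in RHS](mrmulw (fsubsetUr (msupp g1) _) (fsubset_refl _)).
rewrite (mrmulw (msuppD_le _ _) (fsubset_refl _)).
rewrite -big_split /=; apply/eq_bigr=> k1 _.
rewrite -big_split /=; apply/eq_bigr=> k2 _.
by rewrite mcoeffD mulrDl monalgUD.
Qed.

Lemma mrmulDr : right_distributive mrmul +%R.
Proof.
move=> g g1 g2; rewrite [in RHS](mrmulw (fsubset_refl _) (fsubsetUl _ (msupp g2))).
rewrite [in RHS](mrmulw (fsubset_refl _) (fsubsetUr (msupp g1) _)).
rewrite (mrmulw (fsubset_refl _) (msuppD_le _ _)).
rewrite -big_split /=; apply/eq_bigr=> k1 _.
rewrite -big_split /=; apply/eq_bigr=> k2 _.
by rewrite mcoeffD mulrDr monalgUD.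
Qed.

Lemma mrmulA : associative mrmul.
Proof.
move=> g1 g2 g3.
rewrite [RHS](big_morph (mrmul^~ _) (fun _ _ => mrmulDl _ _ _) (mrmul0g _)).
rewrite mrmulEl1; apply/eq_bigr=> k1 _.
rewrite [LHS](big_morph (mrmul _) (fun _ _ => mrmulDr _ _ _) (mrmulg0 _)).
rewrite [RHS](big_morph (mrmul^~ _) (fun _ _ => mrmulDl _ _ _) (mrmul0g _)).
apply/eq_bigr=> k2 _.
rewrite [LHS](big_morph (mrmul _) (fun _ _ => mrmulDr _ _ _) (mrmulg0 _)).
by rewrite mrmulEr1; apply/eq_bigr=> k3 _; rewrite !mrmulUU mulrA mulgA.
Qed.

HB.instance Definition _ := GRing.Zmodule_isPzRing.Build monring
  mrmulA mrmul1g mrmulg1 mrmulDl mrmulDr.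

End MonRing.

(* Carriers of K viewed as a left / right KB-module (depend on B).     *)
Definition augL_ (B : monoidType) (K : comPzRingType) : Type := K.
Definition augR_ (B : monoidType) (K : comPzRingType) : Type := K.

Section Augmentation.
Variables (B : monoidType) (K : comPzRingType).
Implicit Types (g : monring B K).

Definition aug g : K := \sum_(k <- msupp g) g@_k.

Lemma augw (d : {fset B}) g : msupp g `<=` d -> aug g = \sum_(k <- d) g@_k.
Proof.
by move=> le; rewrite /aug (big_fset_incl _ le) // => k _ /mcoeff_outdom.
Qed.

Lemma aug0 : aug 0 = 0.
Proof. by rewrite /aug msupp0 big_seq_fset0. Qed.

Lemma augD g1 g2 : aug (g1 + g2) = aug g1 + aug g2.
Proof.
rewrite (augw (msuppD_le _ _)) (augw (fsubsetUl _ (msupp g2))).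
rewrite (augw (fsubsetUr (msupp g1) _)) -big_split /=.
by apply/eq_bigr => k _; rewrite mcoeffD.
Qed.

Lemma augU (c : K) (k : B) : aug (<< c *g k >> : monring B K) = c.
Proof. by rewrite (augw msuppU_le) big_seq_fset1 mcoeffUU. Qed.

Lemma aug1 : aug 1 = 1.
Proof. exact: augU. Qed.

Lemma monringME g1 g2 : g1 * g2 = \sum_(k1 <- msupp g1) \sum_(k2 <- msupp g2)
     (<< g1@_k1 * g2@_k2 *g (k1 * k2)%g >> : monring B K).
Proof. by []. Qed.

Lemma augM g1 g2 : aug (g1 * g2) = aug g1 * aug g2.
Proof.
rewrite monringME (big_morph aug augD aug0) [aug g1]/aug [aug g2]/aug big_distrlr /=.
apply/eq_bigr => k1 _; rewrite (big_morph aug augD aug0).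
by apply/eq_bigr => k2 _; rewrite augU.
Qed.

Local Notation augL := (augL_ B K).
HB.instance Definition _ := GRing.Zmodule.on augL.

Definition augL_scale (a : monring B K) (v : augL) : augL := (aug a * v : K).

Lemma augL_scalerA a b v :
  augL_scale a (augL_scale b v) = augL_scale (a * b) v.
Proof. by rewrite /augL_scale augM mulrA. Qed.

Lemma augL_scale1r : left_id 1 augL_scale.
Proof. by move=> v; rewrite /augL_scale aug1 mul1r. Qed.

Lemma augL_scalerDr : right_distributive augL_scale +%R.
Proof. by move=> a u v; rewrite /augL_scale mulrDr. Qed.

Lemma augL_scalerDl v : {morph augL_scale^~ v : a b / a + b}.
Proof. by move=> a b; rewrite /augL_scale augD mulrDl. Qed.

HB.instance Definition _ := GRing.Zmodule_isLmodule.Build (monring B K) augL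
  augL_scalerA augL_scale1r augL_scalerDr augL_scalerDl.

(* K regarded as a right KB-module via  k . a = k eps(a); right
   KB-modules are left modules over the converse ring (KB)^c.          *)
Local Notation augR := (augR_ B K).
HB.instance Definition _ := GRing.Zmodule.on augR.

Definition augR_scale (a : (monring B K)^c) (v : augR) : augR :=
  ((v : K) * aug (a : monring B K) : K).

Lemma augR_scalerA a b v :
  augR_scale a (augR_scale b v) = augR_scale (a * b) v.
Proof.
rewrite /augR_scale [(a * b)%R]/GRing.mul /= augM.
by rewrite -mulrA.
Qed.

Lemma augR_scale1r : left_id 1 augR_scale.
Proof. by move=> v; rewrite /augR_scale aug1 mulr1. Qed.

Lemma augR_scalerDr : right_distributive augR_scale +%R.
Proof. by move=> a u v; rewrite /augR_scale mulrDl. Qed.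

Lemma augR_scalerDl v : {morph augR_scale^~ v : a b / a + b}.
Proof. by move=> a b; rewrite /augR_scale augD mulrDr. Qed.

HB.instance Definition _ := GRing.Zmodule_isLmodule.Build (monring B K)^c augR
  augR_scalerA augR_scale1r augR_scalerDr augR_scalerDl.

End Augmentation.

(* (d i : P_(i+1) -> P_i); the maps d i for i >= n are irrelevant.     *)
Definition exact_resolution (M : zmodType) (P : nat -> zmodType)
    (d0 : P 0%N -> M) (d : forall i : nat, P i.+1 -> P i) (n : nat) : Prop :=
  [/\ forall m : M, exists x, d0 x = m,
      (0 < n)%N -> forall x, d0 x = 0 <-> exists y, d 0%N y = x
    &
      forall i : nat, (i.+1 < n)%N ->
        forall x, d i x = 0 <-> exists y, d i.+1 y = x].

Definition FPn (R : pzRingType) (M : lmodType R) (n : nat) : Prop :=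
  exists (r : nat -> nat) (d0 : {linear 'rV[R]_(r 0%N) -> M})
         (d : forall i : nat, {linear 'rV[R]_(r i.+1) -> 'rV[R]_(r i)}),
    @exact_resolution M (fun i => 'rV[R]_(r i) : zmodType) d0 (fun i => d i) n.

Definition left_FPn (B : monoidType) (K : comPzRingType) (n : nat) : Prop :=
  FPn (augL_ B K) n.
Definition right_FPn (B : monoidType) (K : comPzRingType) (n : nat) : Prop :=
  FPn (augR_ B K) n.

Section Bimodules.
Variables (B : monoidType) (K : comPzRingType).

(* KB (x)_K KB, realised with its K-basis { b (x) b' } = B x B. *)
Definition KBtKB : predArgType := malg (B * B)%type K.
HB.instance Definition _ := GRing.Zmodule.on KBtKB.

(* a (u (x) v) a' = a u (x) v a' *)
Definition KBtKB_lact (a : monring B K) (u : KBtKB) : KBtKB :=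
  \sum_(c <- msupp a) \sum_(p <- msupp u)
     << a@_c * u@_p *g ((c * p.1)%g, p.2) >>.
Definition KBtKB_ract (u : KBtKB) (a : monring B K) : KBtKB :=
  \sum_(p <- msupp u) \sum_(c <- msupp a)
     << u@_p * a@_c *g (p.1, (p.2 * c)%g) >>.

Definition freeBi_lact r (a : monring B K) (u : 'rV[KBtKB]_r) : 'rV[KBtKB]_r :=
  map_mx (KBtKB_lact a) u.
Definition freeBi_ract r (u : 'rV[KBtKB]_r) (a : monring B K) : 'rV[KBtKB]_r :=
  map_mx (KBtKB_ract ^~ a) u.

Definition augBi_lact (a : monring B K) (k : K) : K := aug a * k.
Definition augBi_ract (k : K) (a : monring B K) : K := k * aug a.

Definition bimod_hom (M N : zmodType)
    (lM : monring B K -> M -> M) (rM : M -> monring B K -> M)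
    (lN : monring B K -> N -> N) (rN : N -> monring B K -> N)
    (f : {additive M -> N}) : Prop :=
  (forall a m, f (lM a m) = lN a (f m)) /\ (forall m a, f (rM m a) = rN (f m) a).

Definition weak_biFPn (n : nat) : Prop :=
  exists (r : nat -> nat) (d0 : {additive 'rV[KBtKB]_(r 0%N) -> K})
         (d : forall i : nat, {additive 'rV[KBtKB]_(r i.+1) -> 'rV[KBtKB]_(r i)}),
    [/\ bimod_hom (@freeBi_lact (r 0%N)) (@freeBi_ract (r 0%N))
                  augBi_lact augBi_ract d0,
        forall i : nat, bimod_hom (@freeBi_lact (r i.+1)) (@freeBi_ract (r i.+1))
                  (@freeBi_lact (r i)) (@freeBi_ract (r i)) (d i)
      & @exact_resolution K (fun i => 'rV[KBtKB]_(r i) : zmodType)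
                  d0 (fun i => d i) n].

End Bimodules.

(* Main.v *)
Require Import Defs.
From HB Require Import structures.
From mathcomp Require Import all_boot all_algebra.
From mathcomp Require Import finmap monalg.
From Stdlib Require Import ClassicalEpsilon.

Set Implicit Arguments.
Unset Strict Implicit.
Unset Printing Implicit Defensive.
Import GRing.Theory.

Section PartA.
Local Open Scope fset.
Local Open Scope ring_scope.


Section Msum.
Variables (K : comPzRingType) (X : choiceType) (Y : zmodType).
Variable h : X -> K -> Y.
Hypothesis h0 : forall p, h p 0 = 0.
Hypothesis hD : forall p x y, h p (x + y) = h p x + h p y.

Definition msum (u : malg X K) : Y := \sum_(p <- msupp u) h p u@_p.

Lemma msum_w u (d : {fset X}) : msupp u `<=` d -> msum u = \sum_(p <- d) h p u@_p.
Proof. by move=> le; rewrite /msum (big_fset_incl _ le) // => k _ /mcoeff_outdom ->. Qed.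

Lemma msumD u v : msum (u + v) = msum u + msum v.
Proof.
rewrite (msum_w (msuppD_le _ _)) (msum_w (fsubsetUl _ (msupp v))).
rewrite (msum_w (fsubsetUr (msupp u) _)) -big_split /=.
by apply/eq_bigr => k _; rewrite mcoeffD hD.
Qed.

Lemma msumU c k : msum << c *g k >> = h k c.
Proof. by rewrite (msum_w msuppU_le) big_seq_fset1 mcoeffUU. Qed.

Lemma msum0 : msum 0 = 0.
Proof. by rewrite /msum msupp0 big_seq_fset0. Qed.
End Msum.

Lemma addf0 (V W : zmodType) (F : V -> W) : (forall x y, F (x + y) = F x + F y) -> F 0 = 0.
Proof. by move=> FD; apply/(@addrI _ (F 0)); rewrite -FD !addr0. Qed.

Lemma malg_eqU (K : comPzRingType) (X : choiceType) (V : zmodType) (F G : malg X K -> V) :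
  (forall x y, F (x + y) = F x + F y) -> (forall x y, G (x + y) = G x + G y) ->
  (forall c k, F << c *g k >> = G << c *g k >>) -> forall x, F x = G x.
Proof.
move=> FD GD FG x; rewrite (monalgE x).
suff H : forall s : seq X, F (\sum_(k <- s) << x@_k *g k >>) = G (\sum_(k <- s) << x@_k *g k >>) by apply: H.
elim=> [|k s IH]; first by rewrite !big_nil (addf0 FD) (addf0 GD).
by rewrite !big_cons FD GD IH FG.
Qed.

Section KB.
Variables (B : monoidType) (K : comPzRingType).
Local Notation R := (monring B K).
Local Notation T := (KBtKB B K).

Implicit Types (a b : R) (u v : T) (c : K).

Lemma lactE (a : R) (u : T) : KBtKB_lact a u =
  msum (fun (x : B) (ax : K) => msum (fun (p : B * B) (up : K) => << ax * up *g ((x * p.1)%g, p.2) >>) u) a.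
Proof. by []. Qed.

Lemma ractE (u : T) (a : R) : KBtKB_ract u a =
  msum (fun (p : B * B) (up : K) => msum (fun (x : B) (ax : K) => << up * ax *g (p.1, (p.2 * x)%g) >>) a) u.
Proof. by []. Qed.

Lemma lactDr a u v : KBtKB_lact a (u + v) = KBtKB_lact a u + KBtKB_lact a v.
Proof.
rewrite !lactE -big_split /=; apply: eq_bigr => c _.
by rewrite msumD // => *; rewrite ?mulr0 ?monalgU0 ?mulrDr ?monalgUD.
Qed.

Lemma lactDl a b u : KBtKB_lact (a + b) u = KBtKB_lact a u + KBtKB_lact b u.
Proof.
rewrite !lactE msumD //.
  by move=> c; rewrite /msum big1 // => p _; rewrite mul0r monalgU0.
by move=> c x y; rewrite /msum -big_split /=; apply: eq_bigr => p _; rewrite mulrDl monalgUD.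
Qed.

Lemma lactU c (x : B) c' (p : B * B) : KBtKB_lact << c *g x >> << c' *g p >> = << c * c' *g ((x * p.1)%g, p.2) >>.
Proof.
rewrite lactE msumU ?msumU //.
- by move=> *; rewrite mulr0 monalgU0.
- by move=> y; rewrite /msum big1 // => *; rewrite mul0r monalgU0.
Qed.

Lemma ractDl u v a : KBtKB_ract (u + v) a = KBtKB_ract u a + KBtKB_ract v a.
Proof.
rewrite !ractE msumD //.
  by move=> c; rewrite /msum big1 // => p _; rewrite mul0r monalgU0.
by move=> c x y; rewrite /msum -big_split /=; apply: eq_bigr => p _; rewrite mulrDl monalgUD.
Qed.

Lemma ractDr u a b : KBtKB_ract u (a + b) = KBtKB_ract u a + KBtKB_ract u b.
Proof.
rewrite !ractE -big_split /=; apply: eq_bigr => c _.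
by rewrite msumD // => *; rewrite ?mulr0 ?monalgU0 ?mulrDr ?monalgUD.
Qed.

Lemma ractU c (p : B * B) c' (y : B) : KBtKB_ract << c *g p >> << c' *g y >> = << c * c' *g (p.1, (p.2 * y)%g) >>.
Proof.
rewrite ractE msumU ?msumU //.
- by move=> *; rewrite mulr0 monalgU0.
- by move=> y'; rewrite /msum big1 // => *; rewrite mul0r monalgU0.
Qed.

Lemma mrU c1 c2 (k1 k2 : B) : (<< c1 *g k1 >> : R) * << c2 *g k2 >> = << c1 * c2 *g (k1 * k2)%g >>.
Proof. exact: mrmulUU. Qed.

Lemma lactA a b u : KBtKB_lact a (KBtKB_lact b u) = KBtKB_lact (a * b) u.
Proof.
move: a; apply: malg_eqU => [x y|x y|c x]; first by rewrite lactDl.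
  by rewrite mulrDl lactDl.
move: b; apply: malg_eqU => [y z|y z|c2 y]; first by rewrite lactDl lactDr.
  by rewrite mulrDr lactDl.
move: u; apply: malg_eqU => [z w|z w|c3 p]; first by rewrite !lactDr.
  by rewrite lactDr.
by rewrite !lactU mrU lactU mulrA mulgA.
Qed.

Lemma lact1 u : KBtKB_lact 1 u = u.
Proof.
move: u; apply: malg_eqU => [z w|z w|c p] //; first by rewrite lactDr.
by rewrite [1]/GRing.one /= /mrone lactU mul1r mul1g; case: p.
Qed.

Lemma ractA u a b : KBtKB_ract (KBtKB_ract u a) b = KBtKB_ract u (a * b).
Proof.
move: b; apply: malg_eqU => [x y|x y|c x]; first by rewrite ractDr.
  by rewrite mulrDr ractDr.
move: a; apply: malg_eqU => [y z|y z|c2 y]; first by rewrite ractDr ractDl.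
  by rewrite mulrDl ractDr.
move: u; apply: malg_eqU => [z w|z w|c3 p]; first by rewrite !ractDl.
  by rewrite ractDl.
by rewrite !ractU mrU ractU mulrA mulgA.
Qed.

Lemma ract1 u : KBtKB_ract u 1 = u.
Proof.
move: u; apply: malg_eqU => [z w|z w|c p] //; first by rewrite ractDl.
by rewrite [1]/GRing.one /= /mrone ractU mulr1 mulg1; case: p.
Qed.

Lemma lract a u b : KBtKB_ract (KBtKB_lact a u) b = KBtKB_lact a (KBtKB_ract u b).
Proof.
move: a; apply: malg_eqU => [x y|x y|c x]; first by rewrite lactDl ractDl.
  by rewrite lactDl.
move: b; apply: malg_eqU => [y z|y z|c2 y]; first by rewrite ractDr.
  by rewrite ractDr lactDr.
move: u; apply: malg_eqU => [z w|z w|c3 p]; first by rewrite lactDr ractDl.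
  by rewrite ractDl lactDr.
by rewrite lactU !ractU lactU mulrA.
Qed.

Definition alphaL (u : T) : R := msum (fun (p : B * B) (up : K) => << up *g p.1 >>) u.
Definition alphaR (u : T) : R := msum (fun (p : B * B) (up : K) => << up *g p.2 >>) u.

Lemma alphaLD u v : alphaL (u + v) = alphaL u + alphaL v.
Proof. by rewrite /alphaL msumD // => *; rewrite ?monalgU0 ?monalgUD. Qed.
Lemma alphaRD u v : alphaR (u + v) = alphaR u + alphaR v.
Proof. by rewrite /alphaR msumD // => *; rewrite ?monalgU0 ?monalgUD. Qed.
Lemma alphaLU c (p : B * B) : alphaL << c *g p >> = << c *g p.1 >>.
Proof. by rewrite /alphaL msumU // => *; rewrite monalgU0. Qed.
Lemma alphaRU c (p : B * B) : alphaR << c *g p >> = << c *g p.2 >>.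
Proof. by rewrite /alphaR msumU // => *; rewrite monalgU0. Qed.

Lemma alphaL_lact a u : alphaL (KBtKB_lact a u) = a * alphaL u.
Proof.
move: a; apply: malg_eqU => [x y|x y|c x]; first by rewrite lactDl alphaLD.
  by rewrite mulrDl.
move: u; apply: malg_eqU => [y z|y z|c2 p]; first by rewrite lactDr alphaLD.
  by rewrite alphaLD mulrDr.
by rewrite lactU !alphaLU mrU.
Qed.

Lemma alphaL_ract u (b : B) : alphaL (KBtKB_ract u << 1 *g b >>) = alphaL u.
Proof.
move: u; apply: malg_eqU => [y z|y z|c2 p]; first by rewrite ractDl alphaLD.
  by rewrite alphaLD.
by rewrite ractU !alphaLU mulr1.
Qed.

Lemma alphaR_ract u a : alphaR (KBtKB_ract u a) = alphaR u * a.
Proof.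
move: a; apply: malg_eqU => [x y|x y|c x]; first by rewrite ractDr alphaRD.
  by rewrite mulrDr.
move: u; apply: malg_eqU => [y z|y z|c2 p]; first by rewrite ractDl alphaRD.
  by rewrite alphaRD mulrDl.
by rewrite ractU !alphaRU mrU.
Qed.

Lemma alphaR_lact (b : B) u : alphaR (KBtKB_lact << 1 *g b >> u) = alphaR u.
Proof.
move: u; apply: malg_eqU => [y z|y z|c2 p]; first by rewrite lactDr alphaRD.
  by rewrite alphaRD.
by rewrite lactU !alphaRU mul1r.
Qed.

Definition betaL (x : R) : T := msum (fun (y : B) (xb : K) => << xb *g (y, 1%g) >> : T) x.
Definition betaR (x : R) : T := msum (fun (y : B) (xb : K) => << xb *g (1%g, y) >> : T) x.

Lemma alphaL_betaL (x : R) : alphaL (betaL x) = x.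
Proof.
move: x; apply: malg_eqU => [y z|y z|c b] //.
- by rewrite /betaL msumD ?alphaLD // => *; rewrite ?monalgU0 ?monalgUD.
- by rewrite /betaL msumU ?alphaLU // => *; rewrite ?monalgU0.
Qed.

Lemma alphaR_betaR (x : R) : alphaR (betaR x) = x.
Proof.
move: x; apply: malg_eqU => [y z|y z|c b] //.
- by rewrite /betaR msumD ?alphaRD // => *; rewrite ?monalgU0 ?monalgUD.
- by rewrite /betaR msumU ?alphaRU // => *; rewrite ?monalgU0.
Qed.

Lemma lact0r a : KBtKB_lact a 0 = 0.
Proof. exact: (addf0 (lactDr a)). Qed.
Lemma ract0l a : KBtKB_ract 0 a = 0.
Proof. exact: (addf0 (fun u v => ractDl u v a)). Qed.
Lemma alphaL0 : alphaL 0 = 0.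
Proof. exact: (addf0 alphaLD). Qed.
Lemma alphaR0 : alphaR 0 = 0.
Proof. exact: (addf0 alphaRD). Qed.

End KB.

End PartA.

Local Open Scope ring_scope.



Section Core.
Variables (R : pzRingType) (M : lmodType R) (n : nat) (C : nat -> lmodType R).
Variables (dC0 : {linear C 0%N -> M}) (dC : forall i, {linear C i.+1 -> C i}).
Hypothesis ex : @exact_resolution M (fun i => C i : zmodType) dC0 (fun i => dC i) n.
Variables (r : nat -> nat) (al : forall k, {linear C k -> 'rV[R]_(r k)}).
Hypothesis al_surj : forall k q, exists u, al k u = q.
Variables (eps : {linear 'rV[R]_(r 0%N) -> M}) (W : forall k, 'M[R]_(r k.+1, r k)).
Hypothesis heps : forall u, eps (al 0%N u) = dC0 u.
Hypothesis hW : forall k u, al k (dC k u) = al k.+1 u *m W k.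

Lemma ex1 : forall x : M, exists c, dC0 c = x.
Proof. by case: ex. Qed.
Lemma ex2 : (0 < n)%N -> forall x, dC0 x = 0 <-> exists y, dC 0 y = x.
Proof. by case: ex. Qed.
Lemma ex3 : forall i, (i.+1 < n)%N -> forall x, dC i x = 0 <-> exists y, dC i.+1 y = x.
Proof. by case: ex. Qed.

Fixpoint m (k : nat) : nat := if k is k'.+1 then (m k' + r k'.+1)%N else r 0%N.

Definition Psi k : 'M[R]_(r k, m k) :=
  match k with 0%N => 1%:M | k'.+1 => row_mx 0 1%:M end.
Arguments Psi : clear implicits.

Definition Sm k : 'M[R]_(m k, m k.+1) := row_mx 1%:M 0.
Arguments Sm : clear implicits.

Definition phi k (Phi : 'I_(m k) -> C k) (x : 'rV[R]_(m k)) : C k :=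
  \sum_i x 0 i *: Phi i.

Definition Xm k (Phi : 'I_(m k) -> C k) : 'M[R]_(m k, r k) :=
  \matrix_(i, j) (al k (Phi i)) 0 j.

Definition Dm k (Phi : 'I_(m k) -> C k) (T : 'M[R]_(m k)) : 'M[R]_(m k.+1, m k) :=
  col_mx (1%:M - Xm Phi *m Psi k - T) (W k *m Psi k).

Definition lift0 (i : 'I_(m 0)) : C 0%N :=
  epsilon (inhabits 0) (fun c => dC0 c = eps (delta_mx 0 i)).

Definition liftS k (Phi : 'I_(m k) -> C k) (T : 'M[R]_(m k)) (i : 'I_(m k.+1)) : C k.+1 :=
  epsilon (inhabits 0) (fun c => dC k c = phi Phi (row i (Dm Phi T))).

Fixpoint st k : ('I_(m k) -> C k) * 'M[R]_(m k) :=
  match k with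
  | 0%N => (lift0, 0)
  | k'.+1 => (liftS (st k').1 (st k').2, Dm (st k').1 (st k').2 *m Sm k')
  end.

Definition Phi k := (st k).1.
Arguments Phi : clear implicits.
Definition Tm k := (st k).2.
Arguments Tm : clear implicits.
Definition D k := Dm (Phi k) (Tm k).
Arguments Phi : clear implicits.
Arguments Tm : clear implicits.
Arguments D : clear implicits.

Lemma Tm0 : Tm 0 = 0. Proof. by []. Qed.
Lemma TmS k : Tm k.+1 = D k *m Sm k. Proof. by []. Qed.
Lemma PhiS k : Phi k.+1 = liftS (Phi k) (Tm k). Proof. by []. Qed.

Lemma phi_lin k (Ph : 'I_(m k) -> C k) : linear (phi Ph).
Proof.
move=> a x y; rewrite /phi scaler_sumr -big_split /=; apply: eq_bigr => i _.
by rewrite !mxE scalerDl scalerA.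
Qed.

Lemma al_phi k (Ph : 'I_(m k) -> C k) x : al k (phi Ph x) = x *m Xm Ph.
Proof.
rewrite /phi linear_sum mulmx_sum_row; apply: eq_bigr => i _.
rewrite linearZ; congr (_ *: _); apply/rowP => j; by rewrite !mxE.
Qed.

Lemma Chain0 x : dC0 (phi (Phi 0) x) = eps x.
Proof.
rewrite /phi linear_sum [in RHS](row_sum_delta x) linear_sum; apply: eq_bigr => i _.
rewrite !linearZ; congr (_ *: _).
rewrite /Phi /= /lift0.
apply: (epsilon_spec (inhabits 0) (fun c => dC0 c = eps (delta_mx 0 i))).
have [c <-] := ex1 (eps (delta_mx 0 i)); by exists c.
Qed.

Lemma EpsX x : eps (x *m Xm (Phi 0)) = eps x.
Proof. by rewrite -al_phi heps Chain0. Qed.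

Lemma PsiD k : Psi k.+1 *m D k = W k *m Psi k.
Proof. by rewrite /D /Dm /Psi mul_row_col mul0mx add0r mul1mx. Qed.

Lemma SD k : Sm k *m D k = 1%:M - Xm (Phi k) *m Psi k - Tm k.
Proof. by rewrite /D /Dm /Sm mul_row_col mul0mx addr0 mul1mx. Qed.

Lemma WW k : (k.+2 <= n)%N -> W k.+1 *m W k = 0.
Proof.
move=> hk; apply/row_matrixP => i; rewrite row0 row_mul.
have [u hu] := al_surj (delta_mx 0 i).
rewrite rowE -hu -hW -hW.
have [_ ->] := ex3 hk (dC k.+1 u); last by exists u.
by rewrite linear0.
Qed.

Lemma epsW q : (0 < n)%N -> eps (q *m W 0) = 0.
Proof.
move=> hn; have [u <-] := al_surj q.
rewrite -hW heps; have [_ ->] := ex2 hn (dC 0 u); by [| exists u].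
Qed.

Lemma epsD x : (0 < n)%N -> eps (x *m D 0) = 0.
Proof.
move=> hn; rewrite /D /Dm -[x]hsubmxK mul_row_col !linearD /= .
rewrite /Psi !mulmx1 /Tm /= subr0 mulmxBr mulmx1 linearB /= EpsX subrr add0r.
exact: epsW.
Qed.

Definition ChainS k := forall x, dC k (phi (Phi k.+1) x) = phi (Phi k) (x *m D k).

Lemma XChain k : ChainS k -> Xm (Phi k.+1) *m W k = D k *m Xm (Phi k).
Proof.
move=> hc; apply/row_matrixP => i; rewrite !row_mul.
have -> : row i (Xm (Phi k.+1)) = al k.+1 (Phi k.+1 i) by apply/rowP => j; rewrite !mxE.
rewrite -hW -al_phi [row i (D k)]rowE -hc; congr (al k (dC k _)).
rewrite /phi (bigD1 i) //= big1 ?addr0; first by rewrite mxE !eqxx scale1r.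
by move=> j hj; rewrite mxE (negbTE hj) ?andbT ?andbF scale0r.
Qed.

Lemma phiD k (Ph : 'I_(m k) -> C k) x y : phi Ph (x + y) = phi Ph x + phi Ph y.
Proof. by move: (@phi_lin k Ph 1 x y); rewrite !scale1r. Qed.
Lemma phi0 k (Ph : 'I_(m k) -> C k) : phi Ph 0 = 0.
Proof. exact: (addf0 (phiD Ph)). Qed.
Lemma phiZ k (Ph : 'I_(m k) -> C k) a x : phi Ph (a *: x) = a *: phi Ph x.
Proof. by move: (@phi_lin k Ph a x 0); rewrite !addr0 phi0 addr0. Qed.
Lemma phi_mul k (Ph : 'I_(m k) -> C k) l (x : 'rV_l) A :
  phi Ph (x *m A) = \sum_i x 0 i *: phi Ph (row i A).
Proof.
rewrite mulmx_sum_row (big_morph (phi Ph) (phiD Ph) (phi0 Ph)).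
by apply: eq_bigr => i _; rewrite phiZ.
Qed.

Lemma ChainS_of k :
  (forall i, exists c, dC k c = phi (Phi k) (row i (D k))) -> ChainS k.
Proof.
move=> hex x; rewrite phi_mul /phi linear_sum; apply: eq_bigr => i _.
rewrite linearZ; congr (_ *: _); rewrite PhiS /liftS.
apply: (epsilon_spec (inhabits 0) (fun c => dC k c = phi (Phi k) (row i (Dm (Phi k) (Tm k))))).
exact: hex.
Qed.

Lemma DD_gen k : (k.+2 <= n)%N -> ChainS k -> D k *m Tm k = 0 -> D k.+1 *m D k = 0.
Proof.
move=> hn hc hT; rewrite {1}/D /Dm mul_col_mx.
have -> : (1%:M - Xm (Phi k.+1) *m Psi k.+1 - Tm k.+1) *m D k = D k *m Tm k.
  rewrite TmS !mulmxBl mul1mx -!mulmxA PsiD SD !mulmxA XChain // -mulmxA !mulmxBr mulmx1 !mulmxA.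
  by rewrite opprB addrC subrK.
by rewrite hT -mulmxA PsiD mulmxA WW // mul0mx col_mx0.
Qed.

Lemma main_ind k :
  ((k < n)%N -> ChainS k) /\ ((k.+1 < n)%N -> D k.+1 *m D k = 0).
Proof.
elim: k => [|k [IHc IHd]].
  have c0 : (0 < n)%N -> ChainS 0.
    move=> hn; apply: ChainS_of => i; apply: (ex2 hn _).1.
    by rewrite Chain0 rowE epsD.
  split=> // h1; apply: DD_gen => //; first by apply: c0; apply: ltn_trans h1.
  by rewrite Tm0 mulmx0.
have cS : (k.+1 < n)%N -> ChainS k.+1.
  move=> hn; apply: ChainS_of => i; apply: (ex3 hn _).1.
  by rewrite IHc ?(ltn_trans _ hn) // rowE -mulmxA IHd // mulmx0 phi0.
split=> // h2; apply: DD_gen => //; first by apply: cS; apply: ltn_trans h2.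
by rewrite TmS mulmxA IHd ?mul0mx // (ltn_trans _ h2).
Qed.

Lemma core : FPn M n.
Proof.
exists m, eps, (fun i => mulmxr (D i)); split.
- by move=> x; have [c <-] := ex1 x; exists (al 0 c); exact: heps.
- move=> hn x; split; last by move=> [y <-]; rewrite /= epsD.
  move=> hx; have : dC0 (phi (Phi 0) x) = 0 by rewrite Chain0.
  move/(ex2 hn _).1 => [c hc]; exists (row_mx x (al 1 c)) => /=.
  rewrite /D /Dm mul_row_col mulmxA -hW hc al_phi Tm0 /Psi !mulmx1 subr0 mulmxBr mulmx1.
  by rewrite subrK.
- move=> i hi x; split; last first.
    by move=> [y <-] /=; rewrite -mulmxA (main_ind i).2 // mulmx0.
  move=> /= hx; have : dC i (phi (Phi i.+1) x) = 0.
    by rewrite (main_ind i).1 ?(ltn_trans _ hi) //= hx phi0.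
  move/(ex3 hi _).1 => [c hc]; exists (row_mx x (al i.+2 c)) => /=.
  rewrite /D /Dm mul_row_col mulmxA -hW hc al_phi TmS !mulmxBr mulmx1 !mulmxA.
  rewrite [x *m D i]hx mul0mx subr0.
  by rewrite -mulmxA subrK.
Qed.

End Core.


Section Rows.
Variables (B : monoidType) (K : comPzRingType).
Local Notation R := (monring B K).
Local Notation T := (KBtKB B K).
Implicit Types (a b : R) (c : K).

Definition rowU r (i : 'I_r) (x : T) : 'rV[T]_r := \row_j (if j == i then x else 0).
Definition Eb r (i : 'I_r) := rowU i << (1 : K) *g (1%g, 1%g) >>.

Lemma rowUD r (i : 'I_r) x y : rowU i (x + y) = rowU i x + rowU i y.
Proof. by apply/rowP => j; rewrite !mxE; case: eqP; rewrite ?addr0. Qed.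

Lemma rowU_genL r (i : 'I_r) c (p : B * B) :
  rowU i << c *g p >> = freeBi_ract (freeBi_lact << c *g p.1 >> (Eb i)) << (1 : K) *g p.2 >>.
Proof.
apply/rowP => j; rewrite !mxE; case: eqP => _; last by rewrite lact0r ract0l.
by rewrite lactU ractU !mulr1 mulg1 mul1g; case: p.
Qed.

Lemma rowU_genR r (i : 'I_r) c (p : B * B) :
  rowU i << c *g p >> = freeBi_lact << (1 : K) *g p.1 >> (freeBi_ract (Eb i) << c *g p.2 >>).
Proof.
apply/rowP => j; rewrite !mxE; case: eqP => _; last by rewrite ract0l lact0r.
by rewrite ractU lactU !mul1r mulg1 mul1g; case: p.
Qed.

Lemma row_eq (V : zmodType) r (F G : 'rV[T]_r -> V) :
  (forall x y, F (x + y) = F x + F y) -> (forall x y, G (x + y) = G x + G y) ->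
  (forall i c p, F (rowU i << c *g p >>) = G (rowU i << c *g p >>)) -> forall u, F u = G u.
Proof.
move=> FD GD FG u.
have -> : u = \sum_i rowU i (u 0 i).
  apply/rowP => j; rewrite summxE (bigD1 j) //= big1 ?addr0; first by rewrite !mxE eqxx.
  by move=> i hi; rewrite !mxE eq_sym (negbTE hi).
rewrite (big_morph F FD (addf0 FD)) (big_morph G GD (addf0 GD)).
apply: eq_bigr => i _; move: (u 0 i); apply: malg_eqU => [x y|x y|]; by rewrite ?rowUD ?FD ?GD.
Qed.

Lemma alL_lact r a (v : 'rV[T]_r) : map_mx (@alphaL B K) (freeBi_lact a v) = a *: map_mx (@alphaL B K) v.
Proof. by apply/rowP => j; rewrite !mxE alphaL_lact. Qed.
Lemma alL_ract r (v : 'rV[T]_r) (y : B) : map_mx (@alphaL B K) (freeBi_ract v << (1 : K) *g y >>) = map_mx (@alphaL B K) v.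
Proof. by apply/rowP => j; rewrite !mxE alphaL_ract. Qed.
Lemma alL_E r (i : 'I_r) : map_mx (@alphaL B K) (Eb i) = delta_mx 0 i.
Proof. apply/rowP => j; rewrite !mxE eqxx /=; case: eqP => _; by rewrite ?alphaLU ?alphaL0. Qed.
Lemma alLD r (u v : 'rV[T]_r) : map_mx (@alphaL B K) (u + v) = map_mx (@alphaL B K) u + map_mx (@alphaL B K) v.
Proof. by apply/rowP => j; rewrite !mxE alphaLD. Qed.

Lemma alR_ract r a (v : 'rV[T]_r) :
  map_mx (@alphaR B K) (freeBi_ract v a) = (a : R^c) *: (map_mx (@alphaR B K) v : 'rV[R^c]_r).
Proof. by apply/rowP => j; rewrite !mxE alphaR_ract. Qed.
Lemma alR_lact r (v : 'rV[T]_r) (y : B) : map_mx (@alphaR B K) (freeBi_lact << (1 : K) *g y >> v) = map_mx (@alphaR B K) v.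
Proof. by apply/rowP => j; rewrite !mxE alphaR_lact. Qed.
Lemma alR_E r (i : 'I_r) : (map_mx (@alphaR B K) (Eb i) : 'rV[R^c]_r) = delta_mx 0 i.
Proof. apply/rowP => j; rewrite !mxE eqxx /=; case: eqP => _; by rewrite ?alphaRU ?alphaR0. Qed.
Lemma alRD r (u v : 'rV[T]_r) : map_mx (@alphaR B K) (u + v) = map_mx (@alphaR B K) u + map_mx (@alphaR B K) v.
Proof. by apply/rowP => j; rewrite !mxE alphaRD. Qed.

End Rows.

Definition CL (B : monoidType) (K : comPzRingType) (r : nat) : Type := 'rV[KBtKB B K]_r.
Definition CR (B : monoidType) (K : comPzRingType) (r : nat) : Type := 'rV[KBtKB B K]_r.

Section Inst.
Variables (B : monoidType) (K : comPzRingType) (r : nat).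
HB.instance Definition _ := GRing.Zmodule.on (CL B K r).
HB.instance Definition _ := GRing.Zmodule.on (CR B K r).

Definition CLs (a : monring B K) (v : CL B K r) : CL B K r := freeBi_lact a v.
Lemma CLsA a b v : CLs a (CLs b v) = CLs (a * b) v.
Proof. by apply/rowP => j; rewrite !mxE lactA. Qed.
Lemma CLs1 : left_id 1 CLs.
Proof. by move=> v; apply/rowP => j; rewrite !mxE lact1. Qed.
Lemma CLsDr : right_distributive CLs +%R.
Proof. by move=> a u v; apply/rowP => j; rewrite !mxE lactDr. Qed.
Lemma CLsDl v : {morph CLs^~ v : a b / a + b}.
Proof. by move=> a b; apply/rowP => j; rewrite !mxE lactDl. Qed.
HB.instance Definition _ := GRing.Zmodule_isLmodule.Build (monring B K) (CL B K r)
  CLsA CLs1 CLsDr CLsDl.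

Definition CRs (a : (monring B K)^c) (v : CR B K r) : CR B K r := freeBi_ract v a.
Lemma CRsA a b v : CRs a (CRs b v) = CRs (a * b) v.
Proof. by apply/rowP => j; rewrite !mxE ractA. Qed.
Lemma CRs1 : left_id 1 CRs.
Proof. by move=> v; apply/rowP => j; rewrite !mxE ract1. Qed.
Lemma CRsDr : right_distributive CRs +%R.
Proof. by move=> a u v; apply/rowP => j; rewrite !mxE ractDl. Qed.
Lemma CRsDl v : {morph CRs^~ v : a b / a + b}.
Proof. by move=> a b; apply/rowP => j; rewrite !mxE ractDr. Qed.
HB.instance Definition _ := GRing.Zmodule_isLmodule.Build (monring B K)^c (CR B K r)
  CRsA CRs1 CRsDr CRsDl.
End Inst.



Lemma left_part (K : comPzRingType) (B : monoidType) (n : nat) :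
  weak_biFPn B K n -> left_FPn B K n.
Proof.
case=> r [d0 [d [[hd0l hd0r] hd hex]]].
pose C := fun k => (CL B K (r k) : lmodType (monring B K)).
have d0lin : linear (d0 : C 0%N -> augL_ B K).
  by move=> a x y; rewrite raddfD /= hd0l.
pose dC0 := HB.pack_for {linear C 0%N -> augL_ B K} (d0 : C 0%N -> augL_ B K)
   (GRing.isLinear.Build _ (C 0%N) (augL_ B K) *:%R _ d0lin).
have dlin : forall i, linear (d i : C i.+1 -> C i).
  by move=> i a x y; rewrite raddfD /= (hd i).1.
pose dC i := HB.pack_for {linear C i.+1 -> C i} (d i : C i.+1 -> C i)
   (GRing.isLinear.Build _ (C i.+1) (C i) *:%R _ (dlin i)).
have allin : forall k, linear (map_mx (@alphaL B K) : C k -> 'rV[monring B K]_(r k)).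
  by move=> k a x y; rewrite alLD alL_lact.
pose al k := HB.pack_for {linear C k -> 'rV[monring B K]_(r k)}
   (map_mx (@alphaL B K) : C k -> 'rV[monring B K]_(r k))
   (GRing.isLinear.Build _ (C k) _ *:%R _ (allin k)).
have epslin : linear (fun v : 'rV[monring B K]_(r 0%N) => \sum_i v 0 i *: (d0 (Eb B K i) : augL_ B K)).
  move=> a x y; rewrite scaler_sumr -big_split /=; apply: eq_bigr => i _.
  by rewrite !mxE scalerDl scalerA.
pose eps := HB.pack_for {linear 'rV[monring B K]_(r 0%N) -> augL_ B K}
   (fun v : 'rV[monring B K]_(r 0%N) => \sum_i v 0 i *: (d0 (Eb B K i) : augL_ B K))
   (GRing.isLinear.Build _ _ (augL_ B K) *:%R _ epslin).
pose W k : 'M[monring B K]_(r k.+1, r k) := \matrix_(i, j) alphaL ((d k (Eb B K i)) 0 j).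
apply: (@core _ (augL_ B K) n C dC0 dC hex r al _ eps W).
- move=> k q; exists (map_mx (@betaL B K) q); apply/rowP => j.
  by rewrite /al /= !mxE alphaL_betaL.
- move=> u; rewrite /=; move: u; apply: row_eq.
  + by move=> x y; rewrite -big_split /=; apply: eq_bigr => i _; rewrite !mxE alphaLD scalerDl.
  + by move=> x y; rewrite raddfD.
  + move=> i c p; rewrite rowU_genL hd0r hd0l /augBi_ract /augBi_lact !augU mulr1.
    rewrite alL_ract alL_lact alL_E (bigD1 i) //= big1 ?addr0 => [|j hj].
      rewrite !mxE !eqxx /= mulr1.
      by change (aug << c *g p.1 >> * d0 (Eb B K i) = c * d0 (Eb B K i)); rewrite augU.
    by rewrite !mxE (negbTE hj) /= mulr0 scale0r.
- move=> k u; rewrite /=; move: u; apply: row_eq.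
  + by move=> x y; rewrite raddfD alLD.
  + by move=> x y; rewrite alLD mulmxDl.
  + move=> i c p; rewrite rowU_genL (hd k).2 (hd k).1 !alL_ract !alL_lact alL_E -scalemxAl.
    congr (_ *: _); rewrite -rowE; apply/rowP => j; by rewrite !mxE.
Qed.

Lemma right_part (K : comPzRingType) (B : monoidType) (n : nat) :
  weak_biFPn B K n -> right_FPn B K n.
Proof.
case=> r [d0 [d [[hd0l hd0r] hd hex]]].
pose C := fun k => (CR B K (r k) : lmodType (monring B K)^c).
have d0lin : linear (d0 : C 0%N -> augR_ B K).
  by move=> a x y; rewrite raddfD /= hd0r.
pose dC0 := HB.pack_for {linear C 0%N -> augR_ B K} (d0 : C 0%N -> augR_ B K)
   (GRing.isLinear.Build _ (C 0%N) (augR_ B K) *:%R _ d0lin).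
have dlin : forall i, linear (d i : C i.+1 -> C i).
  by move=> i a x y; rewrite raddfD /= (hd i).2.
pose dC i := HB.pack_for {linear C i.+1 -> C i} (d i : C i.+1 -> C i)
   (GRing.isLinear.Build _ (C i.+1) (C i) *:%R _ (dlin i)).
have allin : forall k, linear (map_mx (@alphaR B K) : C k -> 'rV[(monring B K)^c]_(r k)).
  by move=> k a x y; rewrite alRD alR_ract.
pose al k := HB.pack_for {linear C k -> 'rV[(monring B K)^c]_(r k)}
   (map_mx (@alphaR B K) : C k -> 'rV[(monring B K)^c]_(r k))
   (GRing.isLinear.Build _ (C k) _ *:%R _ (allin k)).
have epslin : linear (fun v : 'rV[(monring B K)^c]_(r 0%N) => \sum_i v 0 i *: (d0 (Eb B K i) : augR_ B K)).
  move=> a x y; rewrite scaler_sumr -big_split /=; apply: eq_bigr => i _.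
  by rewrite !mxE scalerDl scalerA.
pose eps := HB.pack_for {linear 'rV[(monring B K)^c]_(r 0%N) -> augR_ B K}
   (fun v : 'rV[(monring B K)^c]_(r 0%N) => \sum_i v 0 i *: (d0 (Eb B K i) : augR_ B K))
   (GRing.isLinear.Build _ _ (augR_ B K) *:%R _ epslin).
pose W k : 'M[(monring B K)^c]_(r k.+1, r k) := \matrix_(i, j) alphaR ((d k (Eb B K i)) 0 j).
apply: (@core _ (augR_ B K) n C dC0 dC hex r al _ eps W).
- move=> k q; exists (map_mx (@betaR B K) q); apply/rowP => j.
  by rewrite /al /= !mxE alphaR_betaR.
- move=> u; rewrite /=; move: u; apply: row_eq.
  + by move=> x y; rewrite -big_split /=; apply: eq_bigr => i _; rewrite !mxE alphaRD scalerDl.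
  + by move=> x y; rewrite raddfD.
  + move=> i c p; rewrite rowU_genR hd0l hd0r /augBi_ract /augBi_lact !augU mul1r.
    rewrite alR_lact alR_ract alR_E (bigD1 i) //= big1 ?addr0 => [|j hj].
      rewrite !mxE !eqxx /= mulr1.
      by change (d0 (Eb B K i) * aug << c *g p.2 >> = d0 (Eb B K i) * c); rewrite augU.
    by rewrite !mxE (negbTE hj) /= mulr0 scale0r.
- move=> k u; rewrite /=; move: u; apply: row_eq.
  + by move=> x y; rewrite raddfD alRD.
  + by move=> x y; rewrite alRD mulmxDl.
  + move=> i c p; rewrite rowU_genR (hd k).1 (hd k).2 !alR_lact !alR_ract alR_E -scalemxAl.
    congr (_ *: _); rewrite -rowE; apply/rowP => j; by rewrite !mxE.
Qed.

Theorem theorem1 (K : comPzRingType) (B : monoidType) (n : nat) :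
  weak_biFPn B K n -> left_FPn B K n /\ right_FPn B K n.
Proof. by move=> h; split; [apply: left_part | apply: right_part]. Qed.
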